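(* Consider ballistic deposition started from the empty configuration. There is a constant $\kappa>0$ such that for all $N$, all integers $H>2$ and every site $i\in G_N$, $$P\big(\sigma_i(N)>H\big)\le e^{-\kappa H}.$$
   Context: Ballistic deposition: for $N\ge2$, $G_N=\{1,\dots,N\}$, a configuration $\sigma\in\mathbb N^N$ gives column heights. Given $\sigma$, an explorer is a walk $(X_n,Z_n)_{n\ge0}$ with $(X_n)$ i.i.d. uniform on $G_N$, $Z_0=\max_i\sigma_i+1$ and $Z_{n+1}=Z_n-1$. With $n^*=\inf\{n:Z_n\le\sigma_{X_n}\}$, the configuration becomes $\sigma+e_{X_{n^*}}$. Explorers are sent successively and independently; $\sigma(t)$ is the configuration after $t$ explorers, $\sigma(0)=(0,\dots,0)$. *)

(* Defs.v *)
From Stdlib Require Import Reals.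
From mathcomp Require Import all_boot.
Set Implicit Arguments. Unset Strict Implicit. Unset Printing Implicit Defensive.

(* Configurations on G_N = 'I_N (site k of the paper is index k-1). *)
Definition config (N : nat) := {ffun 'I_N -> nat}.

(* Explorer landing: Z_n = z, X_n = X n; stop at the first n with Z_n <= sigma_{X_n}.
   Started with z = max sigma + 1, it stops at the latest when z = 0, i.e. within
   max sigma + 2 steps, so the fuel max sigma + 2 is never exhausted. *)
Fixpoint land (N : nat) (s : config N) (X : nat -> 'I_N) (z n fuel : nat) : 'I_N :=
  match fuel with
  | 0 => X n
  | f.+1 => if z <= s (X n) then X n else land s X z.-1 n.+1 f
  end.

Definition maxh (N : nat) (s : config N) : nat := \max_(j : 'I_N) s j.

Definition deposit (N : nat) (s : config N) (X : nat -> 'I_N) : config N :=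
  let x := land s X (maxh s).+1 0 (maxh s).+2 in
  [ffun j => s j + (j == x)].

(* Randomness: w (t, n) is the position X_n of the (t+1)-th explorer.
   Before the (t+1)-th explorer (t < N) the max height is <= t, so it uses
   at most t+2 <= N+1 draws; all draws used within the first N explorers are thus
   i.i.d. uniform coordinates of a uniform w (unused coordinates are irrelevant). *)
Definition draws (N : nat) := {ffun 'I_N.+1 * 'I_N.+1 -> 'I_N}.

Fixpoint sigma_t (N : nat) (w : draws N) (t : nat) : config N :=
  match t with
  | 0 => [ffun => 0]
  | t'.+1 => deposit (sigma_t w t') (fun n => w (inord t', inord n))
  end.

Definition prob_exceeds (N H : nat) (i : 'I_N) : R :=
  Rdiv (INR #|[set w : draws N | H < sigma_t w N i]|) (INR #|{: draws N}|).

(* Main.v *)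
Require Import Defs.
From Stdlib Require Import Reals.
From mathcomp Require Import all_boot.
From mathcomp Require Import zify.
From Stdlib Require Import FunctionalExtensionality.
Set Implicit Arguments. Unset Strict Implicit. Unset Printing Implicit Defensive.

Lemma land_spec N (s : config N) X : forall fuel z n, z < fuel ->
  exists n', [/\ n <= n', n' <= n + z, z - (n' - n) <= s (X n') &
                land s X z n fuel = X n'].
Proof.
elim=> [|f IH] z n hz //=.
case: ifP => h.
  by exists n; rewrite subnn subn0 leqnn leq_addr h.
have hz0 : 0 < z by case: z h {hz} => //=; rewrite leq0n.
have [n' [h1 h2 h3 h4]] := IH z.-1 n.+1 ltac:(lia).
exists n'; split => //; try lia.
Qed.

Definition Rw N := {ffun 'I_N.+1 -> 'I_N}.

Lemma card_row_eq N (j : 'I_N.+1) (i : 'I_N) :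
  N * #|[set r : Rw N | r j == i]| = #|{: Rw N}|.
Proof.
pose F := fun x : 'I_N.+1 => if x == j then pred1 i else predT.
have -> : #|[set r : Rw N | r j == i]| = #|(family F : simpl_pred (Rw N))|.
  apply: eq_card => r; rewrite inE; apply/eqP/familyP => [rj x|]; rewrite /F.
    by case: (x =P j) => [->|_] /=; rewrite ?rj inE.
  by move=> /(_ j); rewrite eqxx inE => /eqP.
rewrite card_family card_ffun card_ord /F.
rewrite foldrE big_image /= (bigD1 j) //= eqxx.
rewrite (eq_bigr (fun _ => N)); last by move=> x /negbTE ->; rewrite card_ord.
rewrite prod_nat_const cardC1 card_ord card1.
by rewrite mul1n -expnS.
Qed.

Lemma sum_bool_card (T : finType) (P : pred T) :
  \sum_(r : T) (P r : nat) = #|[set r | P r]|.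
Proof.
rewrite -sum1_card [RHS]big_mkcond; apply: eq_bigr => r _; rewrite inE; by case: (P r).
Qed.

Definition landr N (s : config N) (r : Rw N) :=
  land s (fun n => r (inord n)) (maxh s).+1 0 (maxh s).+2.

Lemma count_land N (s : config N) (i : 'I_N) :
  N * #|[set r : Rw N | landr s r == i]| <= (s i).+1 * #|{: Rw N}|.
Proof.
set M := maxh s; set y := s i.
have hyM : y <= M by rewrite /y /M /maxh; apply: leq_bigmax.
set a := M.+1 - y.
have H1 : #|[set r : Rw N | landr s r == i]| <=
          \sum_(k < y.+1) #|[set r : Rw N | r (inord (a + k)) == i]|.
  rewrite (eq_bigr (fun k : 'I_y.+1 => \sum_(r : Rw N) (r (inord (a + k)) == i : nat))); last first.
    by move=> k _; rewrite sum_bool_card.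
  rewrite exchange_big /= -sum_bool_card; apply: leq_sum => r _.
  case: eqP => //= hl.
  have [n' [h1 h2 h3 h4]] := @land_spec N s (fun n => r (inord n)) M.+2 M.+1 0 (ltnSn _).
  rewrite /landr -/M h4 /= in hl.
  rewrite hl in h3.
  have hk : n' - a < y.+1 by rewrite /a; lia.
  rewrite (bigD1 (Ordinal hk)) //= .
  have -> : a + (n' - a) = n' by rewrite /a; lia.
  by rewrite hl eqxx.
rewrite (leq_trans (leq_mul (leqnn N) H1)) // big_distrr /=.
under eq_bigr do rewrite card_row_eq.
by rewrite sum_nat_const card_ord.
Qed.

Definition repl N t (w : draws N) (r : Rw N) : draws N :=
  [ffun p => if p.1 == inord t then r p.2 else w p].
Definition rowof N t (w : draws N) : Rw N := [ffun j => w (inord t, j)].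

Lemma sigma_local N t (w1 w2 : draws N) :
  (forall t' n, t' < t -> w1 (inord t', n) = w2 (inord t', n)) ->
  sigma_t w1 t = sigma_t w2 t.
Proof.
elim: t => [//|t IH] h /=.
rewrite IH; last by move=> t' n ht; apply: h; lia.
congr deposit; apply: functional_extensionality => n; apply: h; lia.
Qed.

Lemma sigma_repl N t (w : draws N) r : t <= N ->
  sigma_t (repl t w r) t = sigma_t w t.
Proof.
move=> ht; apply: sigma_local => t' n h; rewrite ffunE /=.
case: eqP => // /(congr1 val) /=; rewrite !inordK; lia.
Qed.

Lemma sigma_succ_repl N t (w : draws N) r : t <= N ->
  sigma_t (repl t w r) t.+1 = deposit (sigma_t w t) (fun n => r (inord n)).
Proof.
move=> ht /=; rewrite sigma_repl //; congr deposit.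
by apply: functional_extensionality => n; rewrite ffunE /= eqxx.
Qed.

Lemma repl_inv N t (w : draws N) r :
  repl t (repl t w r) (rowof t w) = w /\ rowof t (repl t w r) = r.
Proof.
split; apply/ffunP => p; rewrite !ffunE /=.
  by case: eqP => // <-; case: p.
by rewrite eqxx.
Qed.

From mathcomp Require Import all_order all_algebra Rstruct ring lra.
Import GRing.Theory Num.Theory.
Local Open Scope ring_scope.

Lemma sum_repl N t (F : draws N -> R) :
  \sum_(w : draws N) \sum_(r : Rw N) F (repl t w r) =
  #|{: Rw N}|%:R * \sum_(w : draws N) F w.
Proof.
pose phi := fun p : draws N * Rw N => (repl t p.1 p.2, rowof t p.1).
have phiK : cancel phi phi.
  by case=> w r; rewrite /phi /=; have [-> ->] := repl_inv t w r.
transitivity (\sum_(p : draws N * Rw N) F p.1).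
  rewrite pair_big /= [RHS](reindex_inj (can_inj phiK)) /=.
  by apply: eq_bigr.
rewrite -(pair_big predT predT (fun w r => F w)) /= mulr_sumr.
apply: eq_bigr => w _; rewrite sumr_const mulr_natl.
by rewrite cardE.
Qed.
Import Order.TTheory.

Ltac rnorm := rewrite ?R0E ?R1E ?RdivE ?RplusE ?RmultE ?RminusE ?RoppE ?RinvE ?IZRposE ?INRE /=.
Definition one_R := (1%:R : R).
Definition K32 := (3%:R : R) / 2%:R.
Lemma e3 : exp one_R <= 3%:R.
Proof. have /RleP := exp_le_3. by rewrite R1E IZRposE INRE. Qed.
Lemma epos x : 0 < exp x.
Proof. have /RltP := exp_pos x. by rnorm. Qed.
Lemma exp32 : exp K32 <= 11%:R/2%:R.
Proof.
have h : exp K32 * exp K32 = exp one_R ^+ 3.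
  rewrite expRD expRX; congr exp; rewrite /K32 /one_R -mulr_natl; rnorm; lra.
have := e3; have := epos one_R; have := epos K32.
move: h; set a := exp K32; set b := exp one_R => h hb ha hb3.
have : a * a <= 27%:R.
  rewrite h (_ : 27%:R = 3%:R ^+ 3); last by rewrite !exprS expr0; lra.
  by apply: lerXn2r; rewrite ?nnegrE // ltW.
nra.
Qed.

Definition delta := (1%:R : R) / 11%:R.
Definition rr (N : nat) := 1 + K32 / N%:R.
Definition cc N t := 1 + delta * rr N ^+ (N - t).
Definition WW N t y := cc N t ^+ y.+1.

Lemma rr_ge1 N : 1 <= rr N.
Proof.
rewrite /rr /K32 lerDl; apply: divr_ge0; last by rewrite ler0n.
by apply: divr_ge0; rewrite ler0n.
Qed.

Definition kN (N : nat) := K32 / N%:R.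

Lemma rr_powN N : (0 < N)%N -> rr N ^+ N <= 11%:R/2%:R.
Proof.
move=> hN.
have h1 : rr N <= exp (kN N).
  have /RleP := exp_ineq1_le (kN N). by rewrite /rr; rnorm.
apply: le_trans (exp32).
apply: le_trans (_ : exp (kN N) ^+ N <= _).
  apply: lerXn2r; rewrite ?nnegrE //.
    by apply: le_trans (rr_ge1 N).
  exact: ltW (epos _).
rewrite expRX /kN -(mulr_natr (K32 / N%:R)) divfK //; by rewrite pnatr_eq0 -lt0n.
Qed.

Lemma drr_le N m : (0 < N)%N -> (m <= N)%N -> delta * rr N ^+ m <= 1 / 2%:R.
Proof.
move=> hN hm.
have h1 : rr N ^+ m <= rr N ^+ N by apply: ler_weXn2l => //; exact: rr_ge1.
have h2 := rr_powN hN.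
rewrite /delta; lra.
Qed.

Lemma cc_ge1 N t : 1 <= cc N t.
Proof.
rewrite /cc lerDl /delta; apply: mulr_ge0; first by lra.
apply: exprn_ge0; apply: le_trans (rr_ge1 N); lra.
Qed.

Lemma cc_step N t : (t < N)%N ->
  cc N t.+1 + cc N t.+1 * (cc N t.+1 - 1) / N%:R <= cc N t.
Proof.
move=> ht.
have hN : (0 < N)%N by lia.
rewrite /cc.
have -> : (N - t = (N - t.+1).+1)%N by lia.
rewrite exprS.
set x := rr N ^+ (N - t.+1).
have hx1 : 1 <= x by apply: exprn_ege1; exact: rr_ge1.
have hd : delta * x <= 1 / 2%:R by apply: drr_le => //; lia.
have hd0 : 0 <= delta * x by rewrite /delta; apply: mulr_ge0; lra.
set d := delta * x in hd hd0 *.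
have -> : delta * (rr N * x) = d * rr N by rewrite /d; ring.
rewrite /rr.
set u := N%:R^-1.
have hu : 0 <= u by rewrite /u invr_ge0 ler0n.
rewrite /K32 -/u.
have : 0 <= d * u * (1 / 2%:R - d).
  by apply: mulr_ge0; [apply: mulr_ge0 | lra].
rewrite /d in hd hd0 * => hp.
rewrite /u; rewrite -/u.
nra.
Qed.

Lemma bern (a b : R) n : 0 <= b -> b <= a ->
  b ^+ n.+1 + n.+1%:R * b ^+ n * (a - b) <= a ^+ n.+1.
Proof.
move=> hb hba; elim: n => [|n IH].
  by rewrite !expr1 expr0; lra.
rewrite [b ^+ n.+2]exprS [a ^+ n.+2]exprS.
have hbn : 0 <= b ^+ n by apply: exprn_ge0.
have hbn1 : 0 <= b ^+ n.+1 by apply: exprn_ge0.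
have ha : 0 <= a by apply: le_trans hba.
have : a * (b ^+ n.+1 + n.+1%:R * b ^+ n * (a - b)) <= a * a ^+ n.+1.
  by apply: ler_wpM2l.
rewrite exprS -[n.+2]addn1 natrD.
have hn : 0 <= n.+1%:R :> R by rewrite ler0n.
set z := b ^+ n in hbn hbn1 *; set m := n.+1%:R in hn *.
rewrite exprS in hbn1.
rewrite -/z in hbn1. have := mulr_ge0 (mulr_ge0 hn hbn) (sqr_ge0 (a - b)). nra.
Qed.

Lemma inner_real N t y (cnt Rn : nat) : (t < N)%N ->
  (N * cnt <= y.+1 * Rn)%N ->
  Rn%:R * WW N t.+1 y + cnt%:R * (WW N t.+1 y.+1 - WW N t.+1 y) <= Rn%:R * WW N t y.
Proof.
move=> ht hc.
have hN : (0 < N)%N by lia.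
have hc' := cc_step ht.
have h1 := cc_ge1 N t.+1.
rewrite /WW.
set c' := cc N t.+1 in hc' h1 *; set c := cc N t in hc' *.
have hc'y : 0 <= c' ^+ y by apply: exprn_ge0; lra.
have hdiff : c' ^+ y.+2 - c' ^+ y.+1 = c' ^+ y * (c' * (c' - 1)).
  by rewrite !exprS; ring.
rewrite hdiff.
have hcnt : cnt%:R <= y.+1%:R * Rn%:R / N%:R :> R.
  rewrite ler_pdivlMr ?ltr0n // -!natrM ler_nat; lia.
have hcc : c' <= c.
  apply: le_trans hc'; rewrite lerDl; apply: divr_ge0; last by rewrite ler0n.
  apply: mulr_ge0; lra.
have hb := bern y (ltW (lt_le_trans ltr01 h1)) hcc.
rewrite exprS in hb.
set P := c' ^+ y in hc'y hb *.
set D := c' * (c' - 1) in hc' *.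
have hD : 0 <= D by rewrite /D; apply: mulr_ge0; lra.
set k := cnt%:R in hcnt *; set Y := y.+1%:R in hcnt hb *; set Rr := Rn%:R in hcnt *.
have hR : 0 <= Rr by rewrite /Rr ler0n.
have hY : 0 <= Y by rewrite /Y ler0n.
set u := N%:R^-1 in hcnt hc' *.
have hu : 0 <= u by rewrite /u invr_ge0 ler0n.
have hPD : 0 <= P * D by apply: mulr_ge0.
have e1 : k * (P * D) <= Y * Rr * u * (P * D) by apply: ler_wpM2r.
have e2 : D * u <= c - c' by lra.
have e3 : Y * Rr * u * (P * D) <= Rr * (Y * P * (c - c')).
  have -> : Y * Rr * u * (P * D) = Rr * ((Y * P) * (D * u)) by ring.
  apply: ler_wpM2l => //; apply: ler_wpM2l => //; exact: mulr_ge0.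
have e4 : Rr * (c' * P) + Rr * (Y * P * (c - c')) <= Rr * c ^+ y.+1.
  rewrite -mulrDr; apply: ler_wpM2l => //.
rewrite exprS -/P; lra.
Qed.

Lemma inner_sum N t (s : config N) (i : 'I_N) : (t < N)%N ->
  \sum_(r : Rw N) WW N t.+1 (deposit s (fun n => r (inord n)) i) <=
  #|{: Rw N}|%:R * WW N t (s i).
Proof.
move=> ht.
rewrite (eq_bigr (fun r => WW N t.+1 (s i) +
   (landr s r == i)%:R * (WW N t.+1 (s i).+1 - WW N t.+1 (s i)))); last first.
  move=> r _; rewrite /deposit /= ffunE -/(landr s r) eq_sym.
  case: (landr s r == i) => /=; [rewrite addn1; ring | rewrite addn0; ring].
rewrite big_split /= sumr_const -mulr_suml -natr_sum sum_bool_card.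
rewrite -[WW _ _ _ *+ _]mulr_natl.
apply: inner_real => //.
exact: count_land.
Qed.

Definition EE N (i : 'I_N) t := \sum_(w : draws N) WW N t (sigma_t w t i).

Lemma EE_step N (i : 'I_N) t : (t < N)%N -> EE i t.+1 <= EE i t.
Proof.
move=> ht.
have hR : 0 < #|{: Rw N}|%:R :> R.
  rewrite ltr0n card_ffun !card_ord expn_gt0; apply/orP; left; lia.
rewrite -(ler_pM2l hR) /EE -(sum_repl t (fun w => WW N t.+1 (sigma_t w t.+1 i))).
rewrite mulr_sumr; apply: ler_sum => w _.
rewrite (eq_bigr (fun r : Rw N => WW N t.+1 (deposit (sigma_t w t) (fun n => r (inord n)) i))).
  exact: inner_sum.
by move=> r _; rewrite sigma_succ_repl //; apply: ltnW.
Qed.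

Lemma EE_le0 N (i : 'I_N) t : (t <= N)%N -> EE i t <= EE i 0.
Proof.
elim: t => [//|t IH] ht.
apply: le_trans (IH (ltnW ht)); exact: EE_step.
Qed.

Lemma EE0 N (i : 'I_N) : EE i 0 = #|{: draws N}|%:R * cc N 0.
Proof.
rewrite /EE (eq_bigr (fun _ => cc N 0)); last by move=> w _; rewrite /= ffunE /WW expr1.
by rewrite sumr_const mulr_natl.
Qed.

Lemma markov N (i : 'I_N) H :
  #|[set w : draws N | (H < sigma_t w N i)%N]|%:R * cc N N ^+ H.+2 <= EE i N.
Proof.
set A := [set w : draws N | (H < sigma_t w N i)%N].
rewrite mulr_natl -sumr_const /EE [X in _ <= X](bigID (mem A)) /=.
rewrite -[X in X <= _]addr0; apply: lerD; last first.
  apply: sumr_ge0 => w _.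
  apply: exprn_ge0; apply: le_trans (cc_ge1 N N); lra.
apply: ler_sum => w; rewrite inE => hw.
rewrite /WW; apply: ler_weXn2l; first exact: cc_ge1.
done.
Qed.

Definition bS := (201%:R : R) / 200%:R.

Lemma num_ok k : 3%:R / 2%:R * bS ^+ (k + 3) <= (1 + delta) ^+ (k + 3).+2.
Proof.
elim: k => [|k IH].
  rewrite /bS /delta !exprS expr0; lra.
rewrite addSn exprS [X in _ <= X]exprS.
have hb0 : 0 <= bS by rewrite /bS; lra.
have hbc : bS <= 1 + delta by rewrite /bS /delta; lra.
have hc : 0 <= (1 + delta) ^+ (k + 3).+2 by apply: exprn_ge0; rewrite /delta; lra.
have := ler_wpM2l hb0 IH.
have := ler_wpM2r hc hbc.
nra.
Qed.

Lemma final_real N (i : 'I_N) H : (2 < H)%N ->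
  #|[set w : draws N | (H < sigma_t w N i)%N]|%:R / #|{: draws N}|%:R <= (bS ^+ H)^-1.
Proof.
move=> hH.
have hN : (0 < N)%N by case: i => [[|?]] //; lia.
have M := markov i H.
have E := EE_le0 i (leqnn N); rewrite EE0 in E.
have hc0 : cc N 0 <= 3%:R / 2%:R.
  rewrite /cc subn0; have := drr_le hN (leqnn N); lra.
have hcN : cc N N = 1 + delta by rewrite /cc subnn expr0 mulr1.
rewrite hcN in M.
set a := #|[set w : draws N | (H < sigma_t w N i)%N]|%:R in M *.
set d := #|{: draws N}|%:R in E *.
have hd : 0 < d by rewrite /d ltr0n card_ffun expn_gt0 card_ord hN.
have ha : 0 <= a by rewrite /a ler0n.
have hb : 0 < bS ^+ H by apply: exprn_gt0; rewrite /bS; lra.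
have hX : 0 < (1 + delta) ^+ H.+2 by apply: exprn_gt0; rewrite /delta; lra.
have hnum : 3%:R / 2%:R * bS ^+ H <= (1 + delta) ^+ H.+2.
  have -> : H = (H - 3 + 3)%N by lia.
  exact: num_ok.
set X := (1 + delta) ^+ H.+2 in M hX hnum.
set Y := bS ^+ H in hb hnum *.
have hp : a / d * X <= 3%:R / 2%:R.
  rewrite mulrAC ler_pdivrMr //.
  apply: le_trans M (le_trans E _).
  rewrite mulrC; apply: ler_wpM2r => //; exact: ltW.
have hp0 : 0 <= a / d by apply: divr_ge0 => //; exact: ltW.
rewrite -[Y^-1]div1r ler_pdivlMr //.
rewrite -(ler_pM2r hX) mul1r.
have := ler_wpM2r (ltW hb) hp.
nra.
Qed.

Lemma bS_gt1 : Rlt 1 bS.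
Proof. apply/RltP; rewrite /bS; rnorm; lra. Qed.

Close Scope ring_scope.

Theorem proposition6p1 :
  exists kappa : R, Rlt 0 kappa /\
    forall N : nat, 2 <= N -> forall H : nat, 2 < H -> forall i : 'I_N,
      Rle (@prob_exceeds N H i) (exp (Ropp (Rmult kappa (INR H)))).
Proof.
exists (ln bS); split.
  rewrite <- ln_1; apply: ln_increasing; [exact: Rlt_0_1 | exact: bS_gt1].
move=> N hN H hH i.
have hb : Rlt 0 bS by apply: Rlt_trans Rlt_0_1 bS_gt1.
rewrite exp_Ropp Rmult_comm.
change (exp (INR H * ln bS)) with (Rpower bS (INR H)).
rewrite Rpower_pow //.
rewrite /prob_exceeds; apply/RleP.
rewrite RdivE !INRE RinvE RpowE.
exact: final_real.
Qed.
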